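(* For each basis structure $(L,T,U,\bar e)$ of the transformed problem whose basic solution $x$ is feasible, it holds that $x_e\notin\mathbb{N}_{\ge0}$ for all edges $e$ of the cycle $C(\bar e)$.
   Context: Problem: directed multigraph $G=(V,E)$, capacities $u_e\in\mathbb{N}_{\ge0}$, costs $c_e\in\mathbb{Z}$, usage fees $b_e\in\mathbb{N}_{\ge0}$, budget $B\in\mathbb{N}_{\ge0}$; a feasible flow is $x\in\mathbb{R}^E$ with flow conservation at every node and $0\le x\le u$; $b(x)=\sum_eb_ex_e$. The transformed problem replaces the budget $B$ by $B'=B+\tfrac12$. A basis structure is a tuple $(L,T,U,\bar e)$, $\bar e\in E$, $L,T,U$ a partition of $E\setminus\{\bar e\}$, $T$ a spanning tree of the underlying undirected graph, such that the unique cycle $C(\bar e)$ in $T\cup\{\bar e\}$ (oriented along $\bar e$, with forward edges $C^+$ and backward edges $C^-$) has $\sum_{C^+}b-\sum_{C^-}b\neq0$. Its basic solution for the transformed problem is the unique $x$ with flow conservation at every node, $x=0$ on $L$, $x=u$ on $U$, and $b(x)=B'$; it is feasible if $0\le x\le u$. *)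

(* Defs.v *)
From mathcomp Require Import all_boot all_order all_algebra.
Set Implicit Arguments. Unset Strict Implicit. Unset Printing Implicit Defensive.
Import Order.TTheory GRing.Theory Num.Theory.

(* Walks in the underlying undirected graph are sequences of steps
   (e, true) = traverse e forwards (src e -> dst e), (e, false) = backwards. *)
Section Graph.
Variables (V E : finType) (src dst : E -> V).

Definition step_tail (s : E * bool) : V := if s.2 then src s.1 else dst s.1.
Definition step_head (s : E * bool) : V := if s.2 then dst s.1 else src s.1.

Fixpoint walk (v : V) (w : seq (E * bool)) (t : V) : bool :=
  match w with
  | [::] => v == t
  | s :: w' => (step_tail s == v) && walk (step_head s) w' t
  end.

Definition edges_in (F : {set E}) (w : seq (E * bool)) : bool :=
  all (fun s => s.1 \in F) w.

Definition uconnected (F : {set E}) : Prop :=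
  forall x y : V, exists w, edges_in F w && walk x w y.

Definition ucycle_in (F : {set E}) (w : seq (E * bool)) : Prop :=
  [/\ w != [::], edges_in F w, (exists v, walk v w v),
      uniq (map fst w) & uniq (map step_tail w)].

Definition uacyclic (F : {set E}) : Prop := forall w, ~ ucycle_in F w.

Definition spanning_tree (T : {set E}) : Prop := uconnected T /\ uacyclic T.

(* c is the cycle C(ebar) of T + ebar, oriented along ebar.
   (It is unique up to rotation when T is a spanning tree.) *)
Definition fund_cycle (T : {set E}) (ebar : E) (c : seq (E * bool)) : Prop :=
  ucycle_in (ebar |: T) c /\ (ebar, true) \in c.

Definition cycle_fee (b : E -> nat) (c : seq (E * bool)) : int :=
  \sum_(s <- c) (if s.2 then (b s.1)%:Z else - (b s.1)%:Z).

Definition basis_structure (b : E -> nat) (L T U : {set E}) (ebar : E) : Prop :=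
  [/\ [&& [disjoint L & T], [disjoint L & U] & [disjoint T & U]],
      L :|: T :|: U = [set~ ebar],
      spanning_tree T &
      forall c, fund_cycle T ebar c -> cycle_fee b c != 0].

Local Open Scope ring_scope.

Definition flow_conservation (R : numDomainType) (x : E -> R) : Prop :=
  forall v : V, \sum_(e | dst e == v) x e = \sum_(e | src e == v) x e.

Definition fee (R : numDomainType) (b : E -> nat) (x : E -> R) : R :=
  \sum_(e : E) (b e)%:R * x e.

(* x is the basic solution of (L,T,U,ebar) for the transformed problem
   with budget B' = B + 1/2 *)
Definition basic_solution (R : numFieldType) (u b : E -> nat) (B : nat)
    (L U : {set E}) (x : E -> R) : Prop :=
  [/\ flow_conservation x,
      (forall e, e \in L -> x e = 0),
      (forall e, e \in U -> x e = (u e)%:R) &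
      fee b x = B%:R + 2^-1].

Definition feasible (R : numDomainType) (u : E -> nat) (x : E -> R) : Prop :=
  forall e, 0 <= x e <= (u e)%:R.

End Graph.

(* Main.v *)
Require Import Defs.
From mathcomp Require Import all_boot all_order all_algebra.
From mathcomp Require Import zify ring.
From Stdlib Require Import ClassicalEpsilon Classical.
Import Order.TTheory GRing.Theory Num.Theory.
Set Implicit Arguments. Unset Strict Implicit. Unset Printing Implicit Defensive.
Section G.
Variables (V E : finType) (src dst : E -> V).
Local Notation walk := (walk src dst).
Local Notation st := (step_tail src dst).
Local Notation sh := (step_head src dst).

Lemma walk_last a p b : walk a p b -> last a (map sh p) = b.
Proof. by elim: p a => [|s p IH] a /=; [move/eqP | case/andP=> _ /IH]. Qed.

Lemma walk_cat a p b q c : walk a p b -> walk b q c -> walk a (p ++ q) c.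
Proof.
elim: p a => [|s p IH] a /=; first by move/eqP->.
by case/andP=> -> /IH H /H.
Qed.

Lemma walk_catE a p q c : walk a (p ++ q) c ->
  walk a p (last a (map sh p)) /\ walk (last a (map sh p)) q c.
Proof.
elim: p a => [|s p IH] a /=; first by rewrite eqxx.
by case/andP=> -> /IH[].
Qed.

Lemma walk_tails a p b : walk a p b -> map st p = belast a (map sh p).
Proof. by elim: p a => //= s p IH a /andP[/eqP-> /IH->]. Qed.

Lemma walk_ends a p b s : walk a p b -> s \in p ->
  (st s \in a :: map sh p) && (sh s \in a :: map sh p).
Proof.
move=> W sp; apply/andP; split; last by rewrite inE map_f ?orbT.
apply: mem_belast; rewrite -(walk_tails W); exact: map_f.
Qed.

Lemma ends (s : E * bool) v :
  (src s.1 == v) || (dst s.1 == v) = (st s == v) || (sh s == v).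
Proof. by case: s => e [] //=; rewrite orbC. Qed.

Lemma walk_split a p b w : walk a p b -> w \in a :: map sh p ->
  exists p1 p2, [/\ p = p1 ++ p2, walk a p1 w & walk w p2 b].
Proof.
elim: p a => [|s p IH] a /=.
  by rewrite inE => H /eqP->; exists [::], [::]; rewrite /= eqxx.
case/andP=> Hs W; rewrite inE; case/orP=> [/eqP->|Hw].
  by exists [::], (s :: p); rewrite /= eqxx Hs.
have [p1 [p2 [-> W1 W2]]] := IH _ W Hw.
by exists (s :: p1), p2; rewrite /= Hs W1.
Qed.

Lemma simple_uniq a p b : walk a p b -> uniq (a :: map sh p) -> uniq (map fst p).
Proof.
elim: p a => //= s p IH a /andP[/eqP Ha W] /andP[Hna Hu].
rewrite (IH _ W Hu) andbT; apply/negP => /mapP[s' s'p Es].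
have /andP[H1 H2] := walk_ends W s'p.
have : (st s' == a) || (sh s' == a) by rewrite -ends -Es ends Ha eqxx.
by case/orP=> /eqP E'; move: Hna; rewrite -E' ?H1 ?H2.
Qed.

Definition incid (f : E) v := (src f == v) || (dst f == v).

Lemma find_cycle (F : {set E}) :
  (exists e, e \in F) ->
  (forall v e, e \in F -> src e != dst e -> incid e v ->
     exists f, [/\ f \in F, f != e & incid f v]) ->
  exists w, ucycle_in src dst F w.
Proof.
move=> [e0 He0] Hdeg.
case: (boolP [exists f, (f \in F) && (src f == dst f)]).
  case/existsP=> f /andP[Hf /eqP Hl]; exists [:: (f, true)].
  by split=> //=; rewrite ?Hf //; exists (src f); rewrite /step_tail /step_head /= Hl !eqxx.
move=> Hnl.
have nl f : f \in F -> src f != dst f.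
  by move=> Hf; apply/negP=> Hl; move/existsP: Hnl; apply; exists f; rewrite Hf Hl.
have step : forall v0 p sk, walk v0 (rcons p sk) (sh sk) ->
   edges_in F (rcons p sk) -> uniq (v0 :: map sh (rcons p sk)) ->
   (exists w, ucycle_in src dst F w) \/
   exists s, [/\ walk v0 (rcons (rcons p sk) s) (sh s),
      edges_in F (rcons (rcons p sk) s) &
      uniq (v0 :: map sh (rcons (rcons p sk) s))].
  move=> v0 p sk W EF U.
  have Fsk : sk.1 \in F by move: EF; rewrite /edges_in all_rcons => /andP[].
  have [f [Ff fne If]] : exists f, [/\ f \in F, f != sk.1 & incid f (sh sk)].
    by apply: Hdeg => //; [exact: nl | rewrite /incid ends eqxx orbT].
  set s := (f, src f == (sh sk)).
  have Hst : st s = (sh sk).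
    rewrite /s /step_tail /=; case: eqP => //= Hn.
    by move: If; rewrite /incid; case/orP=> /eqP H //; case: Hn.
  have Hsh : sh s != (sh sk).
    rewrite /s /step_head /=; case: (src f =P (sh sk)) => [E1|Hn]; first by move: (nl f Ff); rewrite E1 eq_sym.
    by apply/eqP.
  have W' : walk v0 (rcons (rcons p sk) s) (sh s).
    by rewrite -cats1; apply: (walk_cat W); rewrite /= Hst !eqxx.
  case: (boolP (sh s \in v0 :: map sh (rcons p sk))) => Hin; last first.
    right; exists s; split => //.
      by rewrite /edges_in all_rcons Ff.
    by rewrite map_rcons -rcons_cons rcons_uniq Hin U.
  left.
  have [p1 [p2 [Ep W1 W2]]] := walk_split W Hin.
  case/lastP: p2 Ep W2 => [|p3 s3] Ep W2.
    by move: W2 => /= /eqP E2; move: Hsh; rewrite E2 eqxx.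
  move: Ep; rewrite -rcons_cat => /rcons_inj [Ep3 Es3]; subst s3.
  exists (rcons (rcons p3 sk) s).
  have Hvk : walk (sh s) (rcons (rcons p3 sk) s) (sh s).
    by rewrite -(cats1 _ s); apply: (walk_cat W2); rewrite /= Hst !eqxx.
  have U2 : uniq ((sh s) :: map sh (rcons p3 sk)).
    move: U; rewrite Ep3 rcons_cat map_cat -cat_cons cat_uniq => /and3P[_ Hh Hu].
    rewrite cons_uniq Hu andbT; apply/negP => Hw; move/negP: Hh; apply.
    apply/hasP; exists (sh s) => //; rewrite -(walk_last W1); exact: mem_last.
  split.
  - by rewrite -size_eq0 size_rcons.
  - rewrite /edges_in !all_rcons Ff Fsk /=.
    move: EF; rewrite /edges_in Ep3 rcons_cat all_cat all_rcons => /and3P[_ _ ->].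
    by [].
  - by exists (sh s).
  - have Up := simple_uniq W2 U2.
    rewrite map_rcons rcons_uniq Up andbT.
    rewrite map_rcons mem_rcons inE negb_or fne /=.
    apply/negP => /mapP[s' s'p Ef].
    move: (W2); rewrite -cats1 => /walk_catE[W3 _].
    have /andP[H1 H2] := walk_ends W3 s'p.
    move: U2; rewrite map_rcons -rcons_cons rcons_uniq => /andP[Hn _].
    have : (st s' == (sh sk)) || (sh s' == (sh sk)) by rewrite -ends -Ef.
    by case/orP=> /eqP E'; move: Hn; rewrite -E' ?H1 ?H2.
  - by rewrite (walk_tails Hvk) map_rcons belast_rcons.
have main : forall k v0 p sk, #|V| - size (v0 :: map sh (rcons p sk)) <= k ->
   walk v0 (rcons p sk) (sh sk) ->
   edges_in F (rcons p sk) -> uniq (v0 :: map sh (rcons p sk)) ->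
   exists w, ucycle_in src dst F w.
  elim=> [|k IH] v0 p sk Hk W EF U;
    (case: (step v0 p sk W EF U) => // -[s [W' EF' U']]);
    (have Hle : size (v0 :: map sh (rcons (rcons p sk) s)) <= #|V|
       by rewrite -(card_uniqP U') max_card);
    move: Hle Hk; rewrite /= !size_map !size_rcons => Hle Hk.
    lia.
  apply: (IH v0 (rcons p sk) s) => //.
  rewrite /= size_map !size_rcons; lia.
apply: (main #|V| (src e0) [::] (e0, true)) => //=.
- by rewrite leq_subr.
- by rewrite !eqxx.
- by rewrite He0.
- by rewrite inE /step_head /= nl.
Qed.
End G.
Local Open Scope ring_scope.
Section Fl.
Variable R : realFieldType.
Definition isint (r : R) : Prop := exists z : int, r = z%:~R.

Lemma isint_z (z : int) : isint z%:~R. Proof. by exists z. Qed.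
Lemma isint_n (n : nat) : isint n%:R. Proof. by exists n; rewrite -pmulrn. Qed.
Lemma isint0 : isint 0. Proof. by exists 0. Qed.
Lemma isintD a b : isint a -> isint b -> isint (a + b).
Proof. by move=> [x ->] [y ->]; exists (x + y); rewrite intrD. Qed.
Lemma isintN a : isint a -> isint (- a).
Proof. by move=> [x ->]; exists (- x); rewrite intrN. Qed.
Lemma isintM a b : isint a -> isint b -> isint (a * b).
Proof. by move=> [x ->] [y ->]; exists (x * y); rewrite intrM. Qed.
Lemma isintB a b : isint a -> isint b -> isint (a - b).
Proof. by move=> ? ?; apply: isintD => //; apply: isintN. Qed.
Lemma isint_sum (I : Type) (r : seq I) (P : pred I) (F : I -> R) :
  (forall i, P i -> isint (F i)) -> isint (\sum_(i <- r | P i) F i).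
Proof.
move=> H; elim/big_rec: _ => [|i x Pi Hx]; first exact: isint0.
exact: isintD (H _ Pi) Hx.
Qed.

Lemma not_isint_half : ~ isint 2^-1.
Proof.
move=> [z Hz].
have : (2 * z)%:~R = (1%:~R) :> R.
  by rewrite intrM -Hz /= mulfV // pnatr_eq0.
move/intr_inj => H; lia.
Qed.

Definition nonint (r : R) : bool :=
  if excluded_middle_informative (isint r) then false else true.
Lemma nonintP r : nonint r <-> ~ isint r.
Proof. by rewrite /nonint; case: excluded_middle_informative. Qed.

Section Main.
Variables (V E : finType) (src dst : E -> V).
Local Notation st := (step_tail src dst).
Local Notation sh := (step_head src dst).

Lemma deg (g : E -> R) v e : flow_conservation src dst g ->
  nonint (g e) -> src e != dst e -> incid src dst e v ->
  exists f, [/\ nonint (g f), f != e & incid src dst f v].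
Proof.
move=> Hc He Hl Hi; apply: NNPP => Hn.
have Hno : forall f, f != e -> nonint (g f) -> ~~ incid src dst f v.
  move=> f fe Hf; apply/negP => Hif; apply: Hn; by exists f.
have := Hc v; rewrite !(big_mkcond (fun e => _ == v)) /= => /eqP.
rewrite -subr_eq0 -sumrB (bigD1 e) //= => /eqP H.
have Hs : isint (\sum_(i | i != e) ((if dst i == v then g i else 0) - (if src i == v then g i else 0))).
  apply: isint_sum => f fe; case: (boolP (nonint (g f))) => Hf.
    move: (Hno f fe Hf); rewrite /incid negb_or => /andP[/negbTE -> /negbTE ->].
    by rewrite subrr; apply: isint0.
  have Hgf : isint (g f) by apply: NNPP => /nonintP; rewrite (negbTE Hf).
  by apply: isintB; case: ifP => _; solve [exact: Hgf | exact: isint0].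
have Hge : isint ((if dst e == v then g e else 0) - (if src e == v then g e else 0)).
  have -> : (if dst e == v then g e else 0) - (if src e == v then g e else 0) =
     - \sum_(i | i != e) ((if dst i == v then g i else 0) - (if src i == v then g i else 0)).
    by apply/eqP; rewrite -addr_eq0 H.
  exact: isintN.
apply: (proj1 (nonintP (g e)) He).
move: Hi Hge; rewrite /incid; case/orP => /eqP Hv.
  have -> : (dst e == v) = false by apply/negbTE; rewrite -Hv eq_sym.
  rewrite Hv eqxx sub0r => H0; rewrite -(opprK (g e)); exact: isintN H0.
have -> : (src e == v) = false by apply/negbTE; rewrite -Hv.
by rewrite Hv eqxx subr0.
Qed.

Definition sg (s : E * bool) : R := if s.2 then 1 else -1.
Definition chi (c : seq (E * bool)) (e : E) : R :=
  \sum_(s <- c) (if s.1 == e then sg s else 0).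

Lemma sum_pick (P : pred E) e (k : R) :
  \sum_(f | P f) (if e == f then k else 0) = if P e then k else 0.
Proof.
rewrite big_mkcond (bigD1 e) //= eqxx big1 ?addr0 // => f /negbTE ne.
by rewrite eq_sym ne; case: (P f).
Qed.

Lemma walk_bal a p b v : walk src dst a p b ->
  \sum_(s <- p) ((if dst s.1 == v then sg s else 0) - (if src s.1 == v then sg s else 0))
  = (b == v)%:R - (a == v)%:R.
Proof.
elim: p a => [|s p IH] a /=; first by move/eqP->; rewrite big_nil subrr.
case/andP=> /eqP Ha W; rewrite big_cons (IH _ W) -Ha.
case: s {Ha W} => e [] /=; rewrite /sg /step_tail /step_head /=;
  case: (dst e == v); case: (src e == v) => /=; ring.
Qed.

Lemma chi_circ c a : walk src dst a c a -> flow_conservation src dst (chi c).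
Proof.
move=> W v; rewrite /chi.
rewrite (exchange_big_dep xpredT) //= [RHS](exchange_big_dep xpredT) //=.
under eq_bigr do rewrite sum_pick.
under [RHS]eq_bigr do rewrite sum_pick.
apply/eqP; rewrite -subr_eq0 -sumrB; under eq_bigr do rewrite !andbT. by rewrite (walk_bal v W) subrr.
Qed.

Lemma chi_out c e : e \notin map fst c -> chi c e = 0.
Proof.
move=> He; rewrite /chi big1_seq // => s /andP[_ sc].
case: eqP => // Es; case/negP: He; rewrite -Es; exact: map_f.
Qed.

Lemma chi_in c s : uniq (map fst c) -> s \in c -> chi c s.1 = sg s.
Proof.
elim: c => //= s0 c IH /andP[Hn Hu]; rewrite inE /chi big_cons => /orP[/eqP->|Hs].
  by rewrite eqxx big1_seq ?addr0 // => s' /andP[_ Hs']; case: eqP => // E';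
    case/negP: Hn; rewrite -E'; apply: map_f.
have -> : (s0.1 == s.1) = false.
  by apply/negP=> /eqP E'; case/negP: Hn; rewrite E'; apply: map_f.
by rewrite add0r -(IH Hu Hs).
Qed.

End Main.
End Fl.

Lemma isint_chi (R : realFieldType) (E : finType) (c : seq (E * bool)) f : isint (chi R c f).
Proof.
apply: isint_sum => s _; case: ifP => _; last exact: isint0.
rewrite /sg; case: ifP => _; [exact: (isint_n R 1) | exact: (isintN (isint_n R 1))].
Qed.

Unset Implicit Arguments.
Theorem lemma3 (R : realFieldType) (V E : finType) (src dst : E -> V)
    (u : E -> nat) (c : E -> int) (b : E -> nat) (B : nat)
    (L T U : {set E}) (ebar : E) (x : E -> R) :
  basis_structure src dst b L T U ebar ->
  basic_solution src dst u b B L U x ->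
  feasible u x ->
  forall cyc : seq (E * bool), fund_cycle src dst T ebar cyc ->
  forall e : E, e \in map fst cyc -> forall n : nat, x e != n%:R.
Proof.
move=> [Hdisj Hpart [_ Hacyc] _] [Hfc HL HU Hfee] _ cyc [[Hne Hedges [a Wa] Hu _] Hebar] e He n.
apply/eqP => Hxe.
case/and3P: Hdisj => dLT dLU dTU.
pose k := x ebar.
pose g f := x f - k * chi R cyc f.
have chieb : chi R cyc ebar = 1 := chi_in R Hu Hebar.
have Hg : flow_conservation src dst g.
  move=> v; rewrite /g !sumrB -!mulr_sumr Hfc.
  by rewrite (chi_circ R Wa v).
have notcyc f : f \notin T -> f != ebar -> f \notin map fst cyc.
  move=> fT fe; apply/negP => /mapP[s sc Es].
  have := allP Hedges s sc; rewrite in_setU1 -Es.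
  by rewrite (negbTE fe) (negbTE fT).
have gint : forall f, isint (g f).
  move=> f; apply: NNPP => Hf.
  pose F := [set f | nonint (g f)].
  have FT : forall f, f \in F -> f \in T.
    move=> f'; rewrite inE => /nonintP Hf'.
    case: (f' =P ebar) => [Ef|/eqP fe].
      exfalso; apply: Hf'; rewrite /g Ef chieb mulr1 subrr; exact: isint0.
    have : f' \in L :|: T :|: U by rewrite Hpart !inE fe.
    rewrite !inE => /orP[/orP[fL|->//]|fU]; exfalso; apply: Hf'.
      rewrite /g (chi_out R (notcyc _ _ fe)) ?mulr0 ?subr0 ?HL //; first exact: isint0.
      by rewrite (disjointFr dLT fL).
    rewrite /g (chi_out R (notcyc _ _ fe)) ?mulr0 ?subr0 ?HU //; first exact: isint_n.
    by rewrite (disjointFl dTU fU).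
  have [w Hw] : exists w, ucycle_in src dst F w.
    apply: find_cycle.
      by exists f; rewrite inE; apply/nonintP.
    move=> v f'; rewrite !inE => Hf' Hl Hi.
    have [f'' [H1 H2 H3]] := deg Hg Hf' Hl Hi.
    by exists f''; rewrite inE.
  apply: (Hacyc w); case: Hw => [H1 EF H3 H4 H5]; split=> //.
  apply: sub_all EF => s; exact: FT.
have [s sc Es] := mapP He.
have Hk : isint k.
  have : x e = g e + k * chi R cyc e by rewrite /g subrK.
  rewrite Es (chi_in R Hu sc) -Es Hxe /sg; case: (s.2) => Heq.
    have -> : k = n%:R - g e by rewrite Heq; ring.
    exact: isintB (isint_n _ _) (gint e).
  have -> : k = g e - n%:R by rewrite Heq; ring.
  exact: isintB (gint e) (isint_n _ _).
have Hf : isint (fee b x).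
  apply: isint_sum => f _; apply: isintM; first exact: isint_n.
  have -> : x f = g f + k * chi R cyc f by rewrite /g subrK.
  exact: isintD (gint f) (isintM Hk (isint_chi _ _ _)).
apply: (@not_isint_half R).
have -> : (2^-1 : R) = fee b x - B%:R by rewrite Hfee addrC addKr.
exact: isintB Hf (isint_n _ _).
Qed.
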